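(* Let $P\subset\mathbf H^2$ be a convex polygon and let $\tau:S\to S$ be the homeomorphism of the circle at infinity $S$ induced by the outer billiard map about $P$. Then $\tau$ is not periodic, i.e. there is no $N\ge1$ with $\tau^N=\mathrm{id}_S$.
   Context: Outer billiard in $\mathbf H^2$: $X=\mathbf H^2\setminus P$ is partitioned by the geodesic rays extending the sides of $P$ (the ray extending side $ab$ beyond $a$, vertices counterclockwise) into regions $X_a$ indexed by vertices ($X_a$ = points $x$ for which the geodesic through $x$ and $a$ supports $P$ with $P$ on a fixed side), and the map $T$ is the geodesic symmetry about $a$ on $X_a$. This map extends continuously to a homeomorphism $\tau$ of the circle at infinity. *)

(* Defs.v *)
(* Hyperbolic plane H^2 in the Beltrami-Klein (projective) model:
   H^2 = open unit disk of R^2, geodesics = open chords, circle at infinity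
   S = unit circle. *)
From HB Require Import structures.
From mathcomp Require Import all_boot all_order all_algebra.
From mathcomp Require Import reals.
Set Implicit Arguments. Unset Strict Implicit. Unset Printing Implicit Defensive.
Import Order.TTheory GRing.Theory Num.Theory.
Local Open Scope ring_scope.

Section Billiard.
Variable R : realType.
Definition pt := (R * R)%type.

Definition dot (p q : pt) : R := p.1 * q.1 + p.2 * q.2.
Definition vsub (p q : pt) : pt := (p.1 - q.1, p.2 - q.2).
Definition vscale (k : R) (p : pt) : pt := (k * p.1, k * p.2).

(* orientation: > 0 iff c is strictly to the left of the directed line a->b *)
Definition orient (a b c : pt) : R :=
  (b.1 - a.1) * (c.2 - a.2) - (b.2 - a.2) * (c.1 - a.1).

Definition in_H2 (p : pt) : bool := dot p p < 1.
Definition on_S (p : pt) : bool := dot p p == 1.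

Definition convex_polygon (n : nat) (v : 'I_n -> pt) : Prop :=
  (3 <= n)%N /\ (forall i, in_H2 (v i)) /\
  (forall i j : 'I_n, j != i -> j != ordS i -> 0 < orient (v i) (v (ordS i)) (v j)).

(* The geodesic through the ideal point xi and the vertex a supports P with P
   on the (fixed) left side of the oriented geodesic from xi through a.
   (By linearity of orient in its last argument this is the same as requiring
   it for all points of the convex hull P.) *)
Definition supports (n : nat) (v : 'I_n -> pt) (xi : pt) (i : 'I_n) : bool :=
  [forall j, 0 <= orient xi (v i) (v j)].

(* other ideal endpoint of the geodesic (chord) through xi in S and a in H^2;
   this is the image of xi under the geodesic symmetry about a. *)
Definition chord_other (xi a : pt) : pt :=
  let d := vsub a xi in
  vsub xi (vscale (2 * dot xi d / dot d d) d).

(* tau : S -> S, the continuous extension to the circle at infinity of the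
   outer billiard map T: on the (closed) arc of S bounding X_a, tau is the
   geodesic symmetry about a.  At arc endpoints the two possible vertices lie
   on the same geodesic through xi, so the value does not depend on the
   choice. *)
Definition tau (n : nat) (v : 'I_n -> pt) (xi : pt) : pt :=
  if [pick i | supports v xi i] is Some i then chord_other xi (v i) else xi.

End Billiard.

(* Main.v *)
Require Import Defs.
From HB Require Import structures.
From mathcomp Require Import all_boot all_order all_algebra.
From mathcomp Require Import reals.
From mathcomp Require Import ring lra.
Set Implicit Arguments. Unset Strict Implicit. Unset Printing Implicit Defensive.
Import Order.TTheory GRing.Theory Num.Theory.
Local Open Scope ring_scope.

Section Alg.
Variable R : realType.
Implicit Types (p q y z a c w : pt R) (t : R).

Definition cm (y z : pt R) : pt R := (y.1 * z.1 - y.2 * z.2, y.1 * z.2 + y.2 * z.1).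
Definition cj (y : pt R) : pt R := (y.1, - y.2).
Definition cpt t : pt R := ((1 - t^+2) / (1 + t^+2), (2 * t) / (1 + t^+2)).
Definition xi y t := cm y (cpt t).
Definition cross (p q : pt R) : R := p.1 * q.2 - p.2 * q.1.
Definition nrm p := dot p p.

Lemma onSE y : on_S y = (y.1 * y.1 + y.2 * y.2 == 1).
Proof. by []. Qed.

Lemma onS_eq y : on_S y -> y.1 * y.1 + y.2 * y.2 = 1.
Proof. by move/eqP. Qed.

Lemma H2_lt a : in_H2 a -> a.1 * a.1 + a.2 * a.2 < 1.
Proof. by []. Qed.

Lemma opt_gt0 t : 0 < 1 + t^+2.
Proof. by rewrite ltr_pwDl // sqr_ge0. Qed.

Lemma opt_neq0 t : 1 + t^+2 != 0.
Proof. by rewrite lt0r_neq0 // opt_gt0. Qed.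

Lemma sq2_neq0 (x u : R) : x != 0 -> x ^+ 2 + u ^+ 2 != 0.
Proof.
move=> hx; have h : 0 < x ^+ 2 by rewrite lt_def sqrf_eq0 hx sqr_ge0.
by rewrite lt0r_neq0 // ltr_pwDl // sqr_ge0.
Qed.

Lemma sq2_neq0' (x u : R) : x != 0 -> x * x + u * u != 0.
Proof. by rewrite -!expr2; apply: sq2_neq0. Qed.

Lemma sq2_neq0r (x u : R) : u != 0 -> x * x + u * u != 0.
Proof. by rewrite addrC; apply: sq2_neq0'. Qed.

Lemma diff_neq0 (u w : pt R) : dot u u < dot w w -> dot (vsub u w) (vsub u w) != 0.
Proof.
move=> h; rewrite /dot /vsub /=.
have [e1|e1] := eqVneq (u.1 - w.1) 0; last exact: sq2_neq0'.
have [e2|e2] := eqVneq (u.2 - w.2) 0; last exact: sq2_neq0r.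
move: h; rewrite /dot; move/eqP: e1; rewrite subr_eq0 => /eqP ->.
by move/eqP: e2; rewrite subr_eq0 => /eqP ->; rewrite ltxx.
Qed.

Lemma cpt_S t : on_S (cpt t).
Proof.
rewrite onSE /cpt /=; apply/eqP.
have := opt_neq0 t => h; field.
by [].
Qed.

Lemma cm_dot y z w : dot (cm y z) (cm y w) = dot y y * dot z w.
Proof. rewrite /dot /cm /=; ring. Qed.

Lemma xi_S y t : on_S y -> on_S (xi y t).
Proof.
move=> hy; rewrite /on_S /xi cm_dot (eqP hy) mul1r; exact: cpt_S.
Qed.

Lemma xi0 y : xi y 0 = y.
Proof.
have h := opt_neq0 0.
rewrite /xi /cm /cpt /=; case: y => a b /=; congr (_, _); field => //.
Qed.

Lemma xi_inv y t : on_S y -> cross y (xi y t) / (1 + dot y (xi y t)) = t.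
Proof.
move=> /onS_eq hy; rewrite /cross /xi /dot /cm /cpt /=.
have h := opt_neq0 t.
have E1 : y.1 * (y.1 * (2 * t / (1 + t ^+ 2)) + y.2 * ((1 - t ^+ 2) / (1 + t ^+ 2))) -
  y.2 * (y.1 * ((1 - t ^+ 2) / (1 + t ^+ 2)) - y.2 * (2 * t / (1 + t ^+ 2)))
  = (y.1 * y.1 + y.2 * y.2) * (2 * t / (1 + t ^+ 2)) by ring.
have E2 : y.1 * (y.1 * ((1 - t ^+ 2) / (1 + t ^+ 2)) - y.2 * (2 * t / (1 + t ^+ 2))) +
   y.2 * (y.1 * (2 * t / (1 + t ^+ 2)) + y.2 * ((1 - t ^+ 2) / (1 + t ^+ 2)))
  = (y.1 * y.1 + y.2 * y.2) * ((1 - t ^+ 2) / (1 + t ^+ 2)) by ring.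
have E3 : 1 + (1 - t ^+ 2) / (1 + t ^+ 2) = 2 / (1 + t^+2) by field.
have h2 : (2:R) != 0 by rewrite pnatr_eq0.
rewrite E1 E2 hy !mul1r E3; field.
exact: h.
Qed.

Lemma xi_inj y t t' : on_S y -> xi y t = xi y t' -> t = t'.
Proof. by move=> hy e; rewrite -(xi_inv t hy) e xi_inv. Qed.


Lemma dd_neq0 x a : on_S x -> in_H2 a -> dot (vsub a x) (vsub a x) != 0.
Proof. by move=> hx ha; apply: diff_neq0; rewrite (eqP hx). Qed.

Lemma co_S x a : on_S x -> in_H2 a -> on_S (chord_other x a).
Proof.
move=> hx ha; have hd := dd_neq0 hx ha.
move/onS_eq: hx => hx.
rewrite onSE; apply/eqP; move: hd.
rewrite /chord_other /dot /vsub /vscale /= => hd.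
rewrite -[RHS]hx; field.
exact: hd.
Qed.

Lemma co_rot y z a : on_S y ->
  chord_other (cm y z) (cm y a) = cm y (chord_other z a).
Proof.
move=> /onS_eq hy.
have E1 : vsub (cm y a) (cm y z) = cm y (vsub a z).
  by rewrite /vsub /cm /=; congr (_, _); ring.
rewrite /chord_other E1 !cm_dot /dot hy !mul1r.
rewrite /vsub /vscale /cm /=; congr (_, _); ring.
Qed.

Lemma frame (p q t : R) : p * p + q * q < 1 ->
  ((p - 1)^+2 + q^+2) - 2 * q * t != 0 ->
  chord_other (cpt t) (p, q) =
  xi (chord_other (1,0) (p,q)) ((1 - (p^+2 + q^+2)) * t / (((p - 1)^+2 + q^+2) - 2 * q * t)).
Proof.
move=> ha Hq.
have Ht := opt_neq0 t.
have H2 := sq2_neq0 ((1 - (p ^+ 2 + q ^+ 2)) * t) Hq.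
have H3 : (p - 1) * (p - 1) + q * q != 0.
  have := @diff_neq0 (p, q) (1, 0); rewrite /dot /vsub /= !subr0 mulr0 addr0 mulr1.
  by apply.
have H5 : (p * (1 + t ^+ 2) - (1 - t ^+ 2)) * (p * (1 + t ^+ 2) - (1 - t ^+ 2)) +
      (q * (1 + t ^+ 2) - 2 * t) * (q * (1 + t ^+ 2) - 2 * t) != 0.
  have := @diff_neq0 (p, q) (cpt t).
  rewrite (eqP (cpt_S t)) => /(_ ha) h.
  have -> : (p * (1 + t ^+ 2) - (1 - t ^+ 2)) * (p * (1 + t ^+ 2) - (1 - t ^+ 2)) +
      (q * (1 + t ^+ 2) - 2 * t) * (q * (1 + t ^+ 2) - 2 * t) =
      (1 + t^+2) ^+ 2 * dot (vsub (p, q) (cpt t)) (vsub (p, q) (cpt t)).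
    by rewrite /dot /vsub /cpt /=; field.
  by rewrite mulf_neq0 // expf_neq0.
rewrite /chord_other /xi /cm /cpt /vsub /vscale /dot /=.
by congr (_, _); field; rewrite Hq H2 H3 Ht H5.
Qed.


Lemma cm_assoc y z w : cm y (cm z w) = cm (cm y z) w.
Proof. by rewrite /cm /=; congr (_, _); ring. Qed.

Lemma cm_e y : cm y (1, 0) = y.
Proof. by case: y => a b; rewrite /cm /=; congr (_, _); ring. Qed.

Definition phi y a t := (1 - nrm a) * t / (nrm (vsub a y) - 2 * cross y a * t).

Lemma chart y a t : on_S y -> in_H2 a ->
  nrm (vsub a y) - 2 * cross y a * t != 0 ->
  chord_other (xi y t) a = xi (chord_other y a) (phi y a t).
Proof.
move=> hy ha hq.
have hy' := onS_eq hy.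
set a' := cm (cj y) a.
have ea : cm y a' = a.
  rewrite /a' /cm /cj /= [RHS]surjective_pairing.
  congr (_, _).
    by rewrite -[RHS]mul1r -hy'; ring.
  by rewrite -[RHS]mul1r -hy'; ring.
have n1 : a'.1 * a'.1 + a'.2 * a'.2 = nrm a.
  by rewrite /a' /nrm /dot /cm /cj /= -[RHS]mul1r -hy'; ring.
have n2 : (a'.1 - 1) ^+ 2 + a'.2 ^+ 2 = nrm (vsub a y).
  rewrite /a' /nrm /dot /vsub /cm /cj /=.
  transitivity ((y.1 * y.1 + y.2 * y.2) * (a.1 * a.1 + a.2 * a.2) - 2 * (y.1 * a.1 + y.2 * a.2) + 1).
    ring.
  rewrite hy' mul1r -[X in _ + X]hy'; ring.
have n3 : a'.2 = cross y a by rewrite /a' /cross /cm /cj /=; ring.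
have hp : a'.1 * a'.1 + a'.2 * a'.2 < 1 by rewrite n1.
have hq' : (a'.1 - 1) ^+ 2 + a'.2 ^+ 2 - 2 * a'.2 * t != 0 by rewrite n2 n3.
rewrite /xi -{1}ea co_rot //.
have -> : a' = (a'.1, a'.2) by [].
rewrite frame // /xi cm_assoc -co_rot // cm_e -/a' ea.
congr (xi _ _).
rewrite /phi n2 n3 /nrm -!expr2 in n1 *.
by rewrite n1.
Qed.


Lemma sos_ge0 (u : pt R) : 0 <= dot u u.
Proof. by rewrite /dot addr_ge0 // -expr2 sqr_ge0. Qed.

Lemma dot_lt1 y a : on_S y -> in_H2 a -> dot y a < 1.
Proof.
move=> /onS_eq hy ha.
have E : 2 * (1 - dot y a) = dot (vsub y a) (vsub y a) + (1 - dot a a).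
  have E' : 2 * ((y.1 * y.1 + y.2 * y.2) - dot y a) =
     dot (vsub y a) (vsub y a) + ((y.1 * y.1 + y.2 * y.2) - dot a a).
    by rewrite /dot /vsub /=; ring.
  by rewrite hy in E'.
have := sos_ge0 (vsub y a); move: ha; rewrite /in_H2 => ha h.
have : 0 < 2 * (1 - dot y a) by rewrite E; apply: ltr_wpDl => //; rewrite subr_gt0.
rewrite pmulr_rgt0 // subr_gt0 //.
Qed.

Lemma orient_anti x a b : orient x b a = - orient x a b.
Proof. rewrite /orient; ring. Qed.

Lemma orient_cross x a b : orient x a b = cross (vsub a x) (vsub b x).
Proof. by []. Qed.

Lemma col_scale y a c : orient y a c = 0 ->
  vscale (dot y (vsub a y)) (vsub c y) = vscale (dot y (vsub c y)) (vsub a y).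
Proof.
rewrite /orient => h; rewrite /vscale /vsub /dot /=; congr (_, _).
  transitivity ((y.1 * (a.1 - y.1) + y.2 * (a.2 - y.2)) * (c.1 - y.1) + y.2 *
     ((a.1 - y.1) * (c.2 - y.2) - (a.2 - y.2) * (c.1 - y.1))); first by rewrite h; ring.
  ring.
transitivity ((y.1 * (a.1 - y.1) + y.2 * (a.2 - y.2)) * (c.2 - y.2) - y.1 *
   ((a.1 - y.1) * (c.2 - y.2) - (a.2 - y.2) * (c.1 - y.1))); first by rewrite h; ring.
ring.
Qed.

Lemma dotd_lt0 y a : on_S y -> in_H2 a -> dot y (vsub a y) < 0.
Proof.
move=> hy ha; have := dot_lt1 hy ha; have hy' := onS_eq hy.
have -> : dot y (vsub a y) = dot y a - 1 by rewrite /dot /vsub /= -hy'; ring.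
by rewrite subr_lt0.
Qed.

Lemma same_key y a c : on_S y -> in_H2 a -> orient y a c = 0 -> dot y a = dot y c -> a = c.
Proof.
move=> hy ha h hk; have := col_scale h.
have hd := dotd_lt0 hy ha.
have -> : dot y (vsub c y) = dot y (vsub a y).
  by rewrite /dot /vsub /=; move: hk; rewrite /dot => hk; rewrite !mulrBr; lra.
rewrite /vscale /vsub /= => [[e1 e2]].
have hn : dot y (vsub a y) != 0 by exact: ltr0_neq0.
move/(mulfI hn): e1 => e1; move/(mulfI hn): e2 => e2.
rewrite [a]surjective_pairing [c]surjective_pairing; congr (_, _).
  by move/eqP: e1; rewrite eq_sym subr_eq subrK => /eqP.
by move/eqP: e2; rewrite eq_sym subr_eq subrK => /eqP.
Qed.

Lemma scal_inv (x1 x2 d1 d2 m : R) : m != 0 -> d1 * d1 + d2 * d2 != 0 ->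
  (2 * (x1 * (m * d1) + x2 * (m * d2)) / ((m * d1) * (m * d1) + (m * d2) * (m * d2)) * (m * d1)
    = 2 * (x1 * d1 + x2 * d2) / (d1 * d1 + d2 * d2) * d1) /\
  (2 * (x1 * (m * d1) + x2 * (m * d2)) / ((m * d1) * (m * d1) + (m * d2) * (m * d2)) * (m * d2)
    = 2 * (x1 * d1 + x2 * d2) / (d1 * d1 + d2 * d2) * d2).
Proof.
move=> hm hd.
have h2 : (m * d1) * (m * d1) + (m * d2) * (m * d2) = m ^+ 2 * (d1 * d1 + d2 * d2) by ring.
rewrite h2; split; field; by rewrite hd hm.
Qed.

Lemma co_col x a c : on_S x -> in_H2 a -> in_H2 c -> orient x a c = 0 ->
  chord_other x a = chord_other x c.
Proof.
move=> hx ha hc h.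
have := col_scale h.
have hd := dotd_lt0 hx ha; have he := dotd_lt0 hx hc.
set A := dot x (vsub a x); set C := dot x (vsub c x).
have hA : A != 0 by exact: ltr0_neq0.
have hC : C != 0 by exact: ltr0_neq0.
rewrite /vscale /vsub /= => [[e1 e2]].
have E1 : c.1 - x.1 = (C / A) * (a.1 - x.1).
  by apply: (mulfI hA); rewrite e1; field.
have E2 : c.2 - x.2 = (C / A) * (a.2 - x.2).
  by apply: (mulfI hA); rewrite e2; field.
have hmu : C / A != 0 by rewrite mulf_neq0 // invr_eq0.
have hdd := dd_neq0 hx ha.
move: hdd; rewrite /chord_other /vsub /vscale /dot /= E1 E2 => hdd.
have [S1 S2] := scal_inv x.1 x.2 hmu hdd.
by rewrite S1 S2.
Qed.

Variable n : nat.
Variable v : 'I_n -> pt R.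
Hypothesis vH : forall i, in_H2 (v i).

Lemma supp_col x i j : supports v x i -> supports v x j -> orient x (v i) (v j) = 0.
Proof.
move=> /forallP /(_ j) hi /forallP /(_ i) hj.
rewrite orient_anti oppr_ge0 in hj.
by apply/eqP; rewrite eq_le hj hi.
Qed.

Lemma tau_eq x i : on_S x -> supports v x i -> tau v x = chord_other x (v i).
Proof.
move=> hx hi; rewrite /tau; case: pickP => [k hk|none]; last by rewrite none in hi.
by apply: co_col => //; apply: supp_col.
Qed.

Lemma tau_S x : on_S x -> on_S (tau v x).
Proof. by move=> hx; rewrite /tau; case: pickP => // k _; apply: co_S. Qed.

Lemma iter_S k x : on_S x -> on_S (iter k (tau v) x).
Proof. by move=> hx; elim: k => //= k ih; apply: tau_S. Qed.

Lemma supp_from_col y i j : on_S y -> supports v y i -> orient y (v i) (v j) = 0 ->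
  supports v y j.
Proof.
move=> hy hi h; apply/forallP => k.
have := col_scale h; have hd := dotd_lt0 hy (vH i); have he := dotd_lt0 hy (vH j).
set A := dot y (vsub (v i) y); set C := dot y (vsub (v j) y) => E.
have hk : 0 <= orient y (v i) (v k) by move/forallP: hi.
have key : A * orient y (v j) (v k) = C * orient y (v i) (v k).
  move: E; rewrite /orient /vscale /vsub => [[e1 e2]].
  transitivity ((A * ((v j).1 - y.1)) * ((v k).2 - y.2) - (A * ((v j).2 - y.2)) * ((v k).1 - y.1)).
    ring.
  by rewrite e1 e2; ring.
have : A * orient y (v j) (v k) <= 0 by rewrite key nmulr_rle0.
by rewrite nmulr_rle0.
Qed.


Lemma exists_supp x (i0 : 'I_n) : on_S x -> exists i, supports v x i.
Proof.
move=> hx; have hx' := onS_eq hx.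
pose X k := - dot x (vsub (v k) x).
pose Z k := cross x (vsub (v k) x).
have hX k : 0 < X k by rewrite /X oppr_gt0 dotd_lt0.
pose key k := Z k / X k.
have [i _ hi] := @arg_maxP _ _ _ i0 xpredT key isT.
exists i; apply/forallP => j.
have E : orient x (v i) (v j) = Z i * X j - X i * Z j.
  transitivity (orient x (v i) (v j) * (x.1 * x.1 + x.2 * x.2)); first by rewrite hx' mulr1.
  rewrite /orient /Z /X /cross /dot /vsub /=; ring.
rewrite E subr_ge0.
have h := hi j isT; rewrite /key /= in h.
have hp : 0 <= X i * X j by rewrite ltW // mulr_gt0.
have := ler_wpM2r hp h.
have nXi : X i != 0 by rewrite lt0r_neq0.
have nXj : X j != 0 by rewrite lt0r_neq0.
have -> : Z j / X j * (X i * X j) = X i * Z j by field.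
by have -> : Z i / X i * (X i * X j) = Z i * X j by field.
Qed.


Definition ev (P : R -> Prop) := exists2 d : R, 0 < d & forall s, 0 < s -> s < d -> P s.

Lemma ev_and (P Q : R -> Prop) : ev P -> ev Q -> ev (fun s => P s /\ Q s).
Proof.
move=> [d1 h1 H1] [d2 h2 H2]; exists (Num.min d1 d2); first by rewrite lt_min h1 h2.
move=> s s0; rewrite lt_min => /andP[s1 s2]; split; [exact: H1 | exact: H2].
Qed.

Lemma ev_imp (P Q : R -> Prop) : ev P -> (forall s, 0 < s -> P s -> Q s) -> ev Q.
Proof. move=> [d hd H] h; exists d => // s s0 s1; apply: h => //; exact: H. Qed.

Lemma ev_true (P : R -> Prop) : (forall s, 0 < s -> P s) -> ev P.
Proof. move=> h; exists 1 => // s s0 _; exact: h. Qed.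

Lemma ev_seq (I : eqType) (P : I -> R -> Prop) (l : seq I) :
  (forall i, ev (P i)) -> ev (fun s => forall i, i \in l -> P i s).
Proof.
move=> h; elim: l => [|a l ih]; first by apply: ev_true.
refine (ev_imp (ev_and (h a) ih) _) => s _ [pa pl] i; rewrite inE => /orP[/eqP->|] //.
exact: pl.
Qed.

Lemma ev_fin (I : finType) (P : I -> R -> Prop) :
  (forall i, ev (P i)) -> ev (fun s => forall i, P i s).
Proof.
move=> h; refine (ev_imp (ev_seq (enum I) h) _) => s _ H i; apply: H; exact: mem_enum.
Qed.

Lemma ev_poly (c0 c1 c2 : R) : 0 < c0 \/ (c0 = 0 /\ 0 < c1) ->
  ev (fun s => 0 < c0 + c1 * s + c2 * s ^+ 2).
Proof.
have hc1 : 0 <= `|c1| by [].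
have hc2 : 0 <= `|c2| by [].
have l1 : - `|c1| <= c1 by rewrite lerNnormlW.
have l2 : - `|c2| <= c2 by rewrite lerNnormlW.
case=> [h0|[-> h1]].
  exists (Num.min 1 (c0 / (`|c1| + `|c2| + 1))).
    by rewrite lt_min ltr01 /= divr_gt0 // ltr_wpDl // addr_ge0.
  move=> s s0; rewrite lt_min => /andP[s1 s2].
  have hd : 0 < `|c1| + `|c2| + 1 by rewrite ltr_wpDl // addr_ge0.
  rewrite ltr_pdivlMr // in s2.
  have e1 : - (`|c1| * s) <= c1 * s by rewrite -mulNr ler_wpM2r // ltW.
  have e2 : - (`|c2| * s) <= c2 * s ^+ 2.
    have : - (`|c2| * s ^+ 2) <= c2 * s ^+ 2 by rewrite -mulNr ler_wpM2r // sqr_ge0.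
    apply: le_trans; rewrite lerN2 ler_wpM2l // expr2 ger_pMr //; exact: ltW.
  lra.
exists (c1 / (`|c2| + 1)); first by rewrite divr_gt0 // ltr_wpDl.
move=> s s0 s1.
have hd : 0 < `|c2| + 1 by rewrite ltr_wpDl.
rewrite ltr_pdivlMr // in s1.
have e2 : - (`|c2| * s) * s <= c2 * s ^+ 2.
  by rewrite expr2 mulrA -mulNr ler_wpM2r ?ler_wpM2r // ltW.
have : 0 < (c1 - `|c2| * s) * s by rewrite mulr_gt0 // subr_gt0; lra.
lra.
Qed.

Lemma ev_comp (A G : R) (Q : R -> Prop) : 0 < A -> ev Q ->
  ev (fun s => 0 < 1 + G * s /\ Q (A * s / (1 + G * s))).
Proof.
move=> hA [d hd H].
have hg : 0 < `|G| + 1 by rewrite ltr_wpDl.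
exists (Num.min (1 / (2 * (`|G| + 1))) (d / (2 * A))).
  by rewrite lt_min !divr_gt0 // ?mulr_gt0.
move=> s s0; rewrite lt_min => /andP[s1 s2].
rewrite ltr_pdivlMr ?mulr_gt0 // in s1.
rewrite ltr_pdivlMr ?mulr_gt0 // in s2.
have lG : - `|G| <= G by rewrite lerNnormlW.
have eG : - (`|G| * s) <= G * s by rewrite -mulNr ler_wpM2r // ltW.
have hp : 1 / 2 < 1 + G * s by lra.
have hp0 : 0 < 1 + G * s by lra.
split => //; apply: H; first by rewrite divr_gt0 // mulr_gt0.
rewrite ltr_pdivrMr //.
have : d * (1 / 2) < d * (1 + G * s) by rewrite ltr_pM2l.
lra.
Qed.

Definition sgn (b : bool) : R := if b then 1 else -1.

Lemma sgn2 b : sgn b * sgn b = 1.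
Proof. by case: b; rewrite /sgn ?mulr1 ?mulrNN ?mulr1. Qed.

Lemma orient_xi y a c t : (1 + t ^+ 2) * orient (xi y t) a c =
  orient y a c + 2 * dot y (vsub c a) * t + (cross a c - cross y (vsub a c)) * t ^+ 2.
Proof.
have h := opt_neq0 t.
rewrite /orient /xi /cm /cpt /dot /vsub /cross /=; field.
exact: h.
Qed.

Lemma ev_orient y a c b :
  0 < orient y a c \/ (orient y a c = 0 /\ 0 < sgn b * dot y (vsub c a)) ->
  ev (fun s => 0 < orient (xi y (sgn b * s)) a c).
Proof.
move=> h.
have : ev (fun s => 0 < orient y a c + (2 * (sgn b * dot y (vsub c a))) * s +
     (cross a c - cross y (vsub a c)) * s ^+ 2).
  apply: ev_poly; case: h => [h|[h1 h2]]; [by left | right; split => //].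
  by rewrite mulr_gt0.
move=> Hev; refine (ev_imp Hev _) => s _ hs.
have := orient_xi y a c (sgn b * s).
have -> : (sgn b * s) ^+ 2 = s ^+ 2 by rewrite exprMn expr2 sgn2 mul1r expr2.
move=> E.
have : 0 < (1 + s ^+ 2) * orient (xi y (sgn b * s)) a c.
  rewrite E.
  by have -> : orient y a c + 2 * dot y (vsub c a) * (sgn b * s) = orient y a c + 2 * (sgn b * dot y (vsub c a)) * s by ring.
by rewrite pmulr_rgt0 // opt_gt0.
Qed.


Variable i0 : 'I_n.
Definition key y i := dot y (v i).
Definition sel (b : bool) y : 'I_n :=
  if [pick i | supports v y i] is Some j then
    (if b then Order.arg_min j (supports v y) (key y)
     else Order.arg_max j (supports v y) (key y))
  else i0.

Lemma sel_spec b y : on_S y -> supports v y (sel b y) /\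
  (forall j, supports v y j ->
     if b then key y (sel b y) <= key y j else key y j <= key y (sel b y)).
Proof.
move=> hy; rewrite /sel; case: pickP => [j hj|none]; last first.
  by have [i hi] := exists_supp i0 hy; rewrite none in hi.
case: b.
  case: (@arg_minP _ _ _ j (supports v y) (key y) hj) => i hi H.
  by split => // k hk; apply: H.
case: (@arg_maxP _ _ _ j (supports v y) (key y) hj) => i hi H.
by split => // k hk; apply: H.
Qed.

Lemma orient_aa x a : orient x a a = 0.
Proof. rewrite /orient; ring. Qed.

Lemma dot_vsub y c a : dot y (vsub c a) = dot y c - dot y a.
Proof. rewrite /dot /vsub /=; ring. Qed.

Lemma sel_step b y : on_S y -> ev (fun s => supports v (xi y (sgn b * s)) (sel b y)).
Proof.
move=> hy; have [hs hk] := sel_spec b hy.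
suff H : ev (fun s => forall j, 0 <= orient (xi y (sgn b * s)) (v (sel b y)) (v j)).
  by refine (ev_imp H _) => s _ H0; apply/forallP.
apply: ev_fin => j.
set a := sel b y in hs hk *.
have h0 : 0 <= orient y (v a) (v j) by move/forallP: hs.
rewrite le_eqVlt in h0; case/orP: h0 => [/eqP h0|h0]; last first.
  by refine (ev_imp (@ev_orient y (v a) (v j) b (or_introl h0)) _) => s _ /ltW.
have hj := supp_from_col hy hs (esym h0).
have hkj := hk j hj.
have [e|ne] := eqVneq (key y a) (key y j).
  have E := same_key hy (vH a) (esym h0) e.
  by apply: ev_true => s _; rewrite -E orient_aa.
suff Hev : ev (fun s => 0 < orient (xi y (sgn b * s)) (v a) (v j)).
  by refine (ev_imp Hev _) => s _ /ltW.
apply: ev_orient.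
right; split => //; rewrite dot_vsub.
rewrite /key in ne hkj.
clear hk; clearbody a; move: hkj; case: b => hkj; rewrite /sgn.
  by rewrite mul1r subr_gt0 lt_def eq_sym ne hkj.
by rewrite mulN1r oppr_gt0 subr_lt0 lt_def ne hkj.
Qed.

Lemma tau_sel b y : on_S y -> tau v y = chord_other y (v (sel b y)).
Proof. by move=> hy; apply: tau_eq => //; have [] := sel_spec b hy. Qed.

Lemma tau_step b y : on_S y ->
  ev (fun s => tau v (xi y (sgn b * s)) = chord_other (xi y (sgn b * s)) (v (sel b y))).
Proof.
move=> hy; refine (ev_imp (sel_step b hy) _) => s _ h.
by apply: tau_eq => //; apply: xi_S.
Qed.


Definition alpha a y := (1 - nrm a) / nrm (vsub a y).

Lemma nrm_pos a y : on_S y -> in_H2 a -> 0 < nrm (vsub a y).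
Proof.
move=> hy ha; rewrite lt_def dd_neq0 //; exact: sos_ge0.
Qed.

Lemma alpha_gt0 a y : on_S y -> in_H2 a -> 0 < alpha a y.
Proof.
move=> hy ha; rewrite /alpha divr_gt0 ?nrm_pos //.
by rewrite subr_gt0.
Qed.

Lemma alpha_cmp y a c : on_S y -> in_H2 a -> in_H2 c -> orient y a c = 0 ->
  dot y a <= dot y c ->
  (alpha c y - alpha a y) = 2 * (dot (vsub a y) (vsub c y)) * (dot y c - dot y a)
     / (nrm (vsub a y) * nrm (vsub c y)) /\ 0 < dot (vsub a y) (vsub c y).
Proof.
move=> hy ha hc h hk.
have hy' := onS_eq hy.
have := col_scale h.
have hd := dotd_lt0 hy ha; have he := dotd_lt0 hy hc.
have hD := nrm_pos hy ha; have hE := nrm_pos hy hc.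
set yd := dot y (vsub a y) in hd *; set ye := dot y (vsub c y) in he *.
rewrite /vscale => [[e1 e2]].
set de := dot (vsub a y) (vsub c y).
set D := nrm (vsub a y) in hD *; set E := nrm (vsub c y) in hE *.
have k1 : yd * E = ye * de.
  transitivity ((yd * (vsub c y).1) * (vsub c y).1 + (yd * (vsub c y).2) * (vsub c y).2).
    by rewrite /E /nrm /dot; ring.
  by rewrite e1 e2 /de /dot /vsub /=; ring.
have k2 : yd * de = ye * D.
  transitivity ((yd * (vsub c y).1) * (vsub a y).1 + (yd * (vsub c y).2) * (vsub a y).2).
    by rewrite /de /dot; ring.
  by rewrite e1 e2 /D /nrm /dot /vsub /=; ring.
have na : 1 - nrm a = - 2 * yd - D.
  rewrite /yd /D /nrm /dot /vsub /=; rewrite -[in LHS]hy'; ring.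
have nc : 1 - nrm c = - 2 * ye - E.
  rewrite /ye /E /nrm /dot /vsub /=; rewrite -[in LHS]hy'; ring.
have hde : 0 < de.
  have : yd * E < 0 by rewrite nmulr_rlt0.
  by rewrite k1 nmulr_rlt0.
split => //.
have hD0 : D != 0 by rewrite lt0r_neq0.
have hE0 : E != 0 by rewrite lt0r_neq0.
rewrite /alpha -/D -/E na nc.
have -> : dot y c - dot y a = ye - yd by rewrite /ye /yd !dot_vsub; ring.
apply: (mulfI hD0); apply: (mulfI hE0).
transitivity (2 * (yd * E) - 2 * (ye * D)); first by field; rewrite ?hD0 ?hE0.
rewrite k1 -k2; field. all: try by rewrite ?hD0 ?hE0.
Qed.

Lemma alpha_le y a c : on_S y -> in_H2 a -> in_H2 c -> orient y a c = 0 ->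
  dot y a <= dot y c -> alpha a y <= alpha c y.
Proof.
move=> hy ha hc h hk; have [E hde] := alpha_cmp hy ha hc h hk.
rewrite -subr_ge0 E divr_ge0 // ?mulr_ge0 ?subr_ge0 // ?ltW // ?nrm_pos //.
Qed.

Lemma alpha_lt y a c : on_S y -> in_H2 a -> in_H2 c -> orient y a c = 0 ->
  dot y a < dot y c -> alpha a y < alpha c y.
Proof.
move=> hy ha hc h hk; have [E hde] := alpha_cmp hy ha hc h (ltW hk).
rewrite -subr_gt0 E divr_gt0 // ?mulr_gt0 ?subr_gt0 // ?nrm_pos //.
Qed.


Definition Mb b p k := \prod_(j < k) alpha (v (sel b (iter j (tau v) p))) (iter j (tau v) p).

Lemma Mb_gt0 b p k : on_S p -> 0 < Mb b p k.
Proof.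
move=> hp; rewrite /Mb; apply: prodr_gt0 => j _; apply: alpha_gt0 => //.
exact: iter_S.
Qed.

Lemma sgn_neq0 b : sgn b != 0.
Proof. by case: b; rewrite /sgn ?oppr_eq0 oner_eq0. Qed.

Lemma induct b p k : on_S p -> exists G, ev (fun s => 0 < 1 + G * s /\
   iter k (tau v) (xi p (sgn b * s)) =
   xi (iter k (tau v) p) (sgn b * (Mb b p k * s / (1 + G * s)))).
Proof.
move=> hp; elim: k => [|k [G H]].
  exists 0; apply: ev_true => s _; split; first by rewrite mul0r addr0 ltr01.
  by rewrite /Mb big_ord0 mul0r addr0 divr1 mul1r.
set yk := iter k (tau v) p.
have hyk : on_S yk by apply: iter_S.
set a := v (sel b yk).
have ha : in_H2 a by apply: vH.
set q := cross yk a; set D := nrm (vsub a yk).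
have hD : 0 < D by apply: nrm_pos.
set M := Mb b p k.
have hM : 0 < M by apply: Mb_gt0.
have Hev2 : ev (fun u => 0 < D + (- (2 * q * sgn b)) * u + 0 * u ^+ 2).
  by apply: ev_poly; left.
have Hc := ev_comp G hM (ev_and (tau_step b hyk) Hev2).
exists (G - 2 * q * sgn b * M / D).
refine (ev_imp (ev_and H Hc) _) => s s0 [[hG E] [_ [E1 E2]]].
set f := M * s / (1 + G * s) in E E1 E2.
rewrite mul0r addr0 in E2.
have hden : D - 2 * q * (sgn b * f) != 0.
  have -> : D - 2 * q * (sgn b * f) = D + - (2 * q * sgn b) * f by ring.
  by rewrite lt0r_neq0.
have hpos : 1 + (G - 2 * q * sgn b * M / D) * s = (1 + G * s) * (D - 2 * q * (sgn b * f)) / D.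
  by rewrite /f; field; rewrite !lt0r_neq0.
have E2' : 0 < D - 2 * q * (sgn b * f).
  by have -> : D - 2 * q * (sgn b * f) = D + - (2 * q * sgn b) * f by ring.
split; first by rewrite hpos divr_gt0 // mulr_gt0.
rewrite iterS E -/yk E1 chart // iterS -/yk (tau_sel b hyk).
congr (xi _ _).
have HM : Mb b p k.+1 = M * alpha a yk by rewrite /M /Mb big_ord_recr.
have X : D + (G * D - 2 * q * sgn b * M) * s = (1 + G * s) * (D - 2 * q * (sgn b * f)).
  by rewrite /f; field; rewrite lt0r_neq0.
have X' : D + (G * D - 2 * q * sgn b * M) * s != 0 by rewrite X lt0r_neq0 // mulr_gt0.
rewrite /phi -/D -/q HM /alpha -/D /f.
by field; rewrite X' !lt0r_neq0.
Qed.


Lemma Mb_one b p N : on_S p -> (forall x, on_S x -> iter N (tau v) x = x) -> Mb b p N = 1.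
Proof.
move=> hp hid; have [G [d hd H]] := induct b N hp.
set M := Mb b p N in H *.
have key s : 0 < s -> s < d -> 1 + G * s = M.
  move=> s0 s1; have [hG E] := H s s0 s1.
  rewrite (hid _ (xi_S _ hp)) (hid _ hp) in E.
  have := xi_inj hp E => /(mulfI (sgn_neq0 b)) e.
  have hs : s != 0 by rewrite lt0r_neq0.
  apply: (mulIf hs).
  transitivity ((1 + G * s) * (M * s / (1 + G * s))); first by rewrite -e.
  by field; rewrite lt0r_neq0.
have k1 := key (d / 2); have k2 := key (d / 4).
have h1 : 0 < d / 2 by rewrite divr_gt0.
have h2 : 0 < d / 4 by rewrite divr_gt0.
have h1' : d / 2 < d by rewrite ltr_pdivrMr // ltr_pMr // ltr1n.
have h2' : d / 4 < d by rewrite ltr_pdivrMr // ltr_pMr // ltr1n.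
have e := k1 h1 h1'; rewrite -(k2 h2 h2') in e.
have : G * (d / 4) = 0.
  have : G * (d / 2) - G * (d / 4) = 0 by move/addrI: e => ->; rewrite subrr.
  have -> : G * (d / 2) - G * (d / 4) = G * (d / 4) by field.
  done.
move/eqP; rewrite mulf_eq0 => /orP[/eqP G0|]; last by move/eqP => h; move: h2; rewrite h ltxx.
by rewrite -(k2 h2 h2') G0 mul0r addr0.
Qed.

Lemma prod_lt k (f g : 'I_k.+1 -> R) : (forall i, 0 < f i) -> (forall i, f i <= g i) ->
  f ord0 < g ord0 -> \prod_i f i < \prod_i g i.
Proof.
move=> hf hfg h0; rewrite !big_ord_recl.
have P1 : 0 < \prod_(i < k) f (lift ord0 i) by apply: prodr_gt0.
have P2 : \prod_(i < k) f (lift ord0 i) <= \prod_(i < k) g (lift ord0 i).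
  by apply: ler_prod => j _; apply/andP; split; [apply: ltW | apply: hfg].
apply: (lt_le_trans (y := g ord0 * \prod_(i < k) f (lift ord0 i))).
  by rewrite ltr_pM2r.
by rewrite ler_pM2l // (lt_trans _ h0).
Qed.

Lemma M_le p k : on_S p -> (0 < k)%N ->
  (forall y, on_S y -> alpha (v (sel true y)) y <= alpha (v (sel false y)) y) ->
  alpha (v (sel true p)) p < alpha (v (sel false p)) p ->
  Mb true p k < Mb false p k.
Proof.
move=> hp; case: k => // k _ hle hlt.
apply: prod_lt => //= i.
  by apply: alpha_gt0 => //; apply: iter_S.
by apply: hle; apply: iter_S.
Qed.


Lemma alpha_sel_le y : on_S y -> alpha (v (sel true y)) y <= alpha (v (sel false y)) y.
Proof.
move=> hy; have [ht kt] := sel_spec true hy; have [hf kf] := sel_spec false hy.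
apply: alpha_le => //; first exact: supp_col.
exact: kt.
Qed.

Lemma alpha_sel_lt y i j : on_S y -> supports v y i -> supports v y j ->
  key y i < key y j -> alpha (v (sel true y)) y < alpha (v (sel false y)) y.
Proof.
move=> hy hi hj hij; have [ht kt] := sel_spec true hy; have [hf kf] := sel_spec false hy.
apply: alpha_lt => //; first exact: supp_col.
exact: (le_lt_trans (kt i hi) (lt_le_trans hij (kf j hj))).
Qed.

End Alg.

Lemma sum_sq0 (R : realType) (x y : R) : x * x + y * y = 0 -> x = 0 /\ y = 0.
Proof.
move=> h.
have hx : 0 <= x * x by rewrite -expr2 sqr_ge0.
have hy : 0 <= y * y by rewrite -expr2 sqr_ge0.
move/eqP: h; rewrite paddr_eq0 // => /andP[/eqP a /eqP b].
by move/eqP: a; rewrite mulf_eq0 orbb => /eqP ->; move/eqP: b; rewrite mulf_eq0 orbb => /eqP ->.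
Qed.

Lemma breakpoint (R : realType) n (v : 'I_n -> pt R) (vH : forall i, in_H2 (v i)) (i j : 'I_n) :
  (forall k, 0 <= orient (v i) (v j) (v k)) -> v i != v j ->
  exists p, [/\ on_S p, supports v p i, supports v p j & key v p j < key v p i].
Proof.
move=> hor hne.
set a0 := v i; set a1 := v j.
set d := vsub a0 a1.
set A := nrm d; set B := dot a0 d; set C := nrm a0 - 1.
have hA : 0 < A.
  rewrite lt_def sos_ge0 andbT; apply/eqP => /sum_sq0 [e1 e2].
  move/eqP: hne; apply; rewrite -/a0 -/a1 [a0]surjective_pairing [a1]surjective_pairing.
  by move/eqP: e1; rewrite subr_eq0 => /eqP ->; move/eqP: e2; rewrite subr_eq0 => /eqP ->.
have hC : C < 0 by rewrite subr_lt0; apply: vH.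
set D := B ^+ 2 - A * C.
have hD : B ^+ 2 < D.
  have : 0 < - (A * C) by rewrite oppr_gt0 pmulr_rlt0.
  rewrite /D; lra.
have hD0 : 0 <= D by apply: le_trans (ltW hD); exact: sqr_ge0.
set r := Num.sqrt D.
have hr : r ^+ 2 = D by rewrite sqr_sqrtr.
have hBr : B < r.
  apply: (le_lt_trans (ler_norm B)).
  by rewrite -sqrtr_sqr ltr_sqrt // (le_lt_trans _ hD) // sqr_ge0.
set t := (- B + r) / A.
have ht : 0 < t by rewrite divr_gt0 // addrC subr_gt0.
have hA0 : A != 0 by rewrite lt0r_neq0.
have quad : A * t ^+ 2 + 2 * B * t + C = 0.
  rewrite /t.
  have -> : A * ((- B + r) / A) ^+ 2 + 2 * B * ((- B + r) / A) + C = (r ^+ 2 - (B ^+ 2 - A * C)) / A.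
    by field.
  by rewrite hr /D subrr mul0r.
set p := (a0.1 + t * d.1, a0.2 + t * d.2).
have hpS : on_S p.
  rewrite onSE; apply/eqP.
  transitivity (A * t ^+ 2 + 2 * B * t + C + 1); last by rewrite quad add0r.
  by rewrite /A /B /C /nrm /dot /p /=; ring.
exists p; split => //.
- apply/forallP => k.
  have -> : orient p a0 (v k) = t * orient a0 a1 (v k) by rewrite /orient /p /d /vsub /=; ring.
  by rewrite mulr_ge0 // ltW.
- apply/forallP => k.
  have -> : orient p a1 (v k) = (1 + t) * orient a0 a1 (v k) by rewrite /orient /p /d /vsub /=; ring.
  by rewrite mulr_ge0 // ltW // ltr_wpDl.
rewrite /key -/a0 -/a1.
have h1 := dot_lt1 hpS (vH i); rewrite -/a0 in h1.
have E : 1 - dot p a0 = t * (dot p a0 - dot p a1).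
  have hp := onS_eq hpS.
  transitivity (p.1 * p.1 + p.2 * p.2 - dot p a0); first by rewrite hp.
  by rewrite /p /dot /d /vsub /=; ring.
have : 0 < t * (dot p a0 - dot p a1) by rewrite -E subr_gt0.
by rewrite pmulr_rgt0 // subr_gt0.
Qed.

Unset Implicit Arguments.

Theorem mainTheorem17 (R : realType) (n : nat) (v : 'I_n -> pt R) :
  convex_polygon v ->
  ~ (exists N : nat, (1 <= N)%N /\
       (forall xi : pt R, on_S xi -> iter N (tau v) xi = xi)).
Proof.
move=> [hn [vH hconv]] [N [hN hid]].
have n0 : (0 < n)%N by apply: leq_trans hn.
set i0 : 'I_n := Ordinal n0.
set i1 := ordS i0; set i2 := ordS i1.
have v1 : nat_of_ord i1 = 1%N by rewrite /= modn_small //; apply: leq_trans hn.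
have v2 : nat_of_ord i2 = 2%N.
  by change (((nat_of_ord i1).+1 %% n) = 2)%N; rewrite v1 modn_small.
have ne10 : i1 != i0 by apply/eqP => /(congr1 (@nat_of_ord n)); rewrite v1.
have ne20 : i2 != i0 by apply/eqP => /(congr1 (@nat_of_ord n)); rewrite v2.
have ne21 : i2 != i1 by apply/eqP => /(congr1 (@nat_of_ord n)); rewrite v2 v1.
have o012 := hconv i0 i2 ne20 ne21.
have hor : forall k, 0 <= orient (v i0) (v i1) (v k).
  move=> k.
  have [->|nk0] := eqVneq k i0.
    by have -> : orient (v i0) (v i1) (v i0) = 0 by rewrite /orient; ring.
  have [->|nk1] := eqVneq k i1.
    by rewrite orient_aa.
  by rewrite ltW // hconv.
have hne : v i0 != v i1.
  apply/eqP => e; move: o012; rewrite -/i1 e.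
  have -> : orient (v i1) (v i1) (v i2) = 0 by rewrite /orient; ring.
  by rewrite ltxx.
have [p [hp s0 s1 hk]] := breakpoint vH hor hne.
have M1 := Mb_one vH i0 true hp hid.
have M2 := Mb_one vH i0 false hp hid.
have := M_le vH hp hN (alpha_sel_le vH i0) (alpha_sel_lt vH i0 hp s1 s0 hk).
by rewrite M1 M2 ltxx.
Qed.
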